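(* For every $n\ge1$ there is a bijection $\sigma\mapsto\sigma'$ from $\mathcal{W}^*_{2n+1}$ onto $\mathcal{C}_{2n+3}$ such that $\mathrm{drop}(\sigma')=\mathrm{des}(\sigma)+1$.
   Context: For $\sigma\in\mathfrak{S}_m$ (permutations of $[m]$), a descent is an index $i$ with $\sigma_i>\sigma_{i+1}$, with descent pair $(\sigma_i,\sigma_{i+1})$; $\mathrm{des}(\sigma)$ is the number of descents. $\mathcal{W}^*_{2n+1}$ is the set of permutations of $[2n+1]$ whose every descent pair consists of two odd entries and whose last entry is odd. A drop of $\sigma$ is a pair $(i,\sigma(i))$ with $i>\sigma(i)$; $\mathrm{drop}(\sigma)$ is the number of drops; a drop is odd-odd if both $i$ and $\sigma(i)$ are odd. $\mathcal{C}_m$ is the set of cyclic permutations of $[m]$ (consisting of a single $m$-cycle) all of whose drops are odd-odd. *)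

(* Defs.v *)
From mathcomp Require Import all_boot all_order all_fingroup.
Set Implicit Arguments. Unset Strict Implicit. Unset Printing Implicit Defensive.

(* Permutations of [m] = {1..m} are represented as s : {perm 'I_m}; the
   1-based entry sigma_i (i in 1..m) is (s (i-1)) + 1.  Hence a 1-based
   value/position x+1 is odd iff the 0-based x is even. *)

Definition odd1 (x : nat) : bool := ~~ odd x.  (* x+1 is odd *)

(* Descent positions (0-based i with i+1 < m) : sigma_{i+1} > sigma_{i+2}. *)
Definition is_descent (m : nat) (s : {perm 'I_m}) (i : nat) : bool :=
  match insub i, insub i.+1 with
  | Some a, Some b => (s b < s a)%N
  | _, _ => false
  end.

Definition des (m : nat) (s : {perm 'I_m}) : nat :=
  count (is_descent s) (iota 0 m.-1).

Definition Wstar (m : nat) : {set {perm 'I_m}} :=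
  [set s : {perm 'I_m} |
    [forall a : 'I_m, forall b : 'I_m,
       ((val b == (val a).+1) && (s b < s a)%N) ==> (odd1 (s a) && odd1 (s b))]
    && [forall a : 'I_m, (val a == m.-1) ==> odd1 (s a)]].

Definition drop_count (m : nat) (s : {perm 'I_m}) : nat :=
  #|[set i : 'I_m | (s i < i)%N]|.

Definition Ccyc (m : nat) : {set {perm 'I_m}} :=
  [set s : {perm 'I_m} |
    (#|porbits s| == 1%N)
    && [forall i : 'I_m, (s i < i)%N ==> (odd1 i && odd1 (s i))]].

(* Main.v *)
Require Import Defs.
From mathcomp Require Import all_boot all_order all_fingroup zify.
Set Implicit Arguments. Unset Strict Implicit. Unset Printing Implicit Defensive.

Section Bij.
Variable p : nat.
Local Notation m := p.+1.
Local Notation M := p.+3.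

Definition wfun (s : {perm 'I_m}) (x : 'I_M) : 'I_M :=
  inord (if (x < 2)%N then nat_of_ord x else (s (inord (x - 2))).+2).

Lemma wfunE s x : (wfun s x : nat) = if (x < 2)%N then nat_of_ord x else (s (inord (x - 2))).+2.
Proof.
rewrite /wfun inordK //; case: ifP => _; first exact: ltn_ord.
have := ltn_ord (s (inord (x - 2))); lia.
Qed.

Lemma wfun_inj s : injective (wfun s).
Proof.
move=> x y /(congr1 (@nat_of_ord _)); rewrite !wfunE => e; apply: ord_inj.
have hx := ltn_ord x; have hy := ltn_ord y.
case: ifP e => hx2; case: ifP => hy2 e; try lia.
have /perm_inj /(congr1 (@nat_of_ord _)) : s (inord (x - 2)) = s (inord (y - 2)) by apply: ord_inj; lia.
rewrite !inordK; lia.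
Qed.

Definition W s := perm (@wfun_inj s).
Definition r : {perm 'I_M} := perm (@ordS_inj M).
Definition F s := (r ^ W s)%g.

Lemma rE j : (r j : nat) = (j.+1 %% M)%N.
Proof. by rewrite permE. Qed.

Lemma rX j : (j < M)%N -> ((r ^+ j)%g ord0 : nat) = j.
Proof.
elim: j => [|j IH] hj; first by rewrite expg0 perm1.
rewrite expgSr permM rE IH; last lia.
by rewrite modn_small.
Qed.

Lemma FX s j x : ((F s) ^+ j)%g (W s x) = W s ((r ^+ j)%g x).
Proof. by rewrite /F -conjXg permJ. Qed.

Lemma FW s x : F s (W s x) = W s (r x).
Proof. by rewrite /F permJ. Qed.

Lemma WE s x : (W s x : nat) = if (x < 2)%N then nat_of_ord x else (s (inord (x - 2))).+2.
Proof. by rewrite permE wfunE. Qed.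


Lemma odd1S2 x : odd1 x.+2 = odd1 x.
Proof. by rewrite /odd1 /= negbK. Qed.

Lemma dropj s (j : 'I_M) : (W s (r j) < W s j) =
  (nat_of_ord j == p.+2) || ((2 <= j) && (j < p.+2) && (s (inord (j.+1 - 2)) < s (inord (j - 2)))).
Proof.
have hj := ltn_ord j.
rewrite !WE rE.
have [e|hne] := eqVneq (nat_of_ord j) p.+2.
  rewrite e modnn /=; repeat case: ifP => ?; lia.
rewrite /= (modn_small (_ : j.+1 < M)); last lia.
case: ifP => h1; case: ifP => h2; apply/idP/idP; lia.
Qed.

Lemma descE s k : (k < p)%N -> is_descent s k = (s (inord k.+1 : 'I_m) < s (inord k : 'I_m)).
Proof.
move=> hk; rewrite /is_descent.
case: insubP => [a _ ea|hn]; last lia.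
case: insubP => [b _ eb|hn]; last lia.
have -> : a = inord k by apply: ord_inj; rewrite inordK //; lia.
by have -> : b = inord k.+1 by apply: ord_inj; rewrite inordK //; lia.
Qed.


Lemma dropF s : drop_count (F s) = (des s).+1.
Proof.
rewrite /drop_count -(card_preimset _ (@perm_inj _ (W s))).
have -> : W s @^-1: [set i | F s i < i] = [set j | W s (r j) < W s j].
  by apply/setP=> j; rewrite !inE FW.
rewrite -sum1_card big_mkcond /=.
under eq_bigr => j _ do rewrite inE dropj.
rewrite big_ord_recr big_ord_recl big_ord_recl /= eqxx addn1; congr _.+1.
rewrite /des /= -sum1_count big_mkcond /=.
rewrite (_ : iota 0 p = index_iota 0 p); last by rewrite /index_iota subn0.
rewrite big_mkord /= ?add0n.
rewrite [RHS]big_mkcond; apply: eq_bigr => i _.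
rewrite /bump !leq0n !add1n descE //.
have hi := ltn_ord i.
rewrite !subSS !subn0 /=.
case: ifP => h; case: ifP => h'; lia.
Qed.


Lemma WEge s (j : 'I_M) : (2 <= j)%N -> (W s j : nat) = (s (inord (j-2))).+2.
Proof. by rewrite WE => h; rewrite ifF //; lia. Qed.

Lemma WElt s (j : 'I_M) : (j < 2)%N -> (W s j : nat) = j.
Proof. by rewrite WE => ->. Qed.

Lemma porbit_all s x : x \in porbit (F s) (W s ord0).
Proof.
apply/porbitP; exists ((W s)^-1%g x : nat).
rewrite FX (_ : (r ^+ _)%g ord0 = (W s)^-1%g x) ?permKV //.
by apply: ord_inj; rewrite rX.
Qed.

Lemma F_cyc s : s \in Wstar m -> F s \in Ccyc M.
Proof.
rewrite !inE => /andP[/forallP hd /forallP hl]; apply/andP; split.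
  apply/cards1P; exists (porbit (F s) (W s ord0)); apply/setP => O.
  rewrite in_set1; apply/imsetP/eqP => [[x _ ->]|->]; last by exists (W s ord0).
  by apply/eqP; rewrite eq_porbit_mem; apply: porbit_all.
apply/forallP => i; apply/implyP.
rewrite -(permKV (W s) i); set j := ((W s)^-1)%g i.
have hj := ltn_ord j.
rewrite FW dropj => /orP[/eqP e | /andP[/andP[h2 h3] hlt]].
  rewrite (@WElt s (r j)); last by rewrite rE e modnn.
  rewrite rE e modnn WEge ?e // odd1S2 andbT ?subSS ?subn0.
  by have /implyP := hl (inord p); apply; apply/eqP/inordK.
rewrite WEge // WEge; last by rewrite rE modn_small //; lia.
rewrite !odd1S2 rE modn_small; last lia.
have /forallP/(_ (inord (j.+1 - 2))) := hd (inord (j - 2)).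
move/implyP; apply; rewrite hlt andbT /=.
by apply/eqP; rewrite !inordK; lia.
Qed.


Lemma Wpow s (x : 'I_M) : ((F s)^+ x)%g ord0 = W s x.
Proof.
have -> : ord0 = W s ord0 by apply: ord_inj; rewrite WElt.
rewrite FX (_ : (r ^+ x)%g ord0 = x) //.
by apply: ord_inj; rewrite rX.
Qed.

Lemma F_inj : injective F.
Proof.
move=> s1 s2 e; apply/permP => k; apply: ord_inj.
have hk := ltn_ord k.
have := Wpow s1 (inord k.+2); rewrite e Wpow => /(congr1 (@nat_of_ord _)).
rewrite !WEge ?inordK //; try lia.
rewrite (_ : inord (k.+2 - 2) = k); last by apply: ord_inj; rewrite inordK //; lia.
by case.
Qed.


Section Surj.
Variable t : {perm 'I_M}.
Hypothesis ht : t \in Ccyc M.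

Lemma hall x : x \in porbit t ord0.
Proof.
move: ht; rewrite inE => /andP[/cards1P [O hO] _].
have h1 : porbit t x = O by apply/set1P; rewrite -hO; apply: imset_f.
have h2 : porbit t ord0 = O by apply/set1P; rewrite -hO; apply: imset_f.
by rewrite h2 -h1 porbit_id.
Qed.

Lemma hcard : #|porbit t ord0| = M.
Proof.
rewrite (_ : porbit t ord0 = setT) ?cardsT ?card_ord //.
by apply/setP => x; rewrite inE hall.
Qed.

Lemma hiter : iter M t ord0 = ord0.
Proof. by have := iter_porbit t ord0; rewrite hcard. Qed.

Definition V (j : 'I_M) := iter j t ord0.

Lemma V_inj : injective V.
Proof.
have u := uniq_traject_porbit t ord0; rewrite hcard in u.
move=> i j e; apply: ord_inj; apply/eqP.
rewrite -(nth_uniq ord0 _ _ u) ?size_traject // !nth_traject //.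
by rewrite /V in e; rewrite e.
Qed.

Lemma t0 : (t ord0 : nat) = 1.
Proof.
have hd : forall i, (t i < i)%N -> odd1 i && odd1 (t i).
  move: ht; rewrite inE => /andP[_ /forallP h] i; exact/implyP.
set x := (t^-1)%g (inord 1).
have tx : t x = inord 1 by rewrite permKV.
have [e|ne] := eqVneq (nat_of_ord x) 0.
  by rewrite (_ : ord0 = x) ?tx ?inordK //; apply: ord_inj.
have [e1|ne1] := eqVneq (nat_of_ord x) 1.
  have xe : x = inord 1 by apply: ord_inj; rewrite inordK.
  have := hall x; rewrite porbit_sym => /porbitP [i].
  rewrite permX_fix; last by rewrite tx xe.
  by move/(congr1 (@nat_of_ord _)) => /=; lia.
have := hd x; rewrite tx inordK //.
have /= := ltn_ord x; move=> _ /(_ _)/andP[] //; lia.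
Qed.


Lemma V0 : V ord0 = ord0. Proof. by []. Qed.

Lemma Vge2 (j : 'I_M) : (2 <= j)%N -> (2 <= V j)%N.
Proof.
move=> hj.
have n0 : V j != V ord0 by apply/eqP => /V_inj /(congr1 (@nat_of_ord _)) /=; lia.
have n1 : V j != V (inord 1).
  by apply/eqP => /V_inj /(congr1 (@nat_of_ord _)); rewrite inordK //=; lia.
have e1 : V (inord 1) = t ord0 by rewrite /V inordK.
rewrite e1 in n1; move/eqP: n0 => n0; move/eqP: n1 => n1.
have h0 : nat_of_ord (V j) <> 0 by move=> h; apply: n0; apply: ord_inj.
have h1 : nat_of_ord (V j) <> 1 by move=> h; apply: n1; apply: ord_inj; rewrite h t0.
lia.
Qed.

Definition sigf (k : 'I_m) : 'I_m := inord (V (inord k.+2) - 2).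

Lemma sigfE k : (sigf k).+2 = V (inord k.+2).
Proof.
have hk := ltn_ord k.
have h2 := Vge2 (j := inord k.+2); rewrite inordK in h2; last lia.
have hv := ltn_ord (V (inord k.+2)).
rewrite /sigf inordK; lia.
Qed.

Lemma sigf_inj : injective sigf.
Proof.
move=> a b e; have := sigfE a; rewrite e sigfE => /ord_inj /V_inj /(congr1 (@nat_of_ord _)).
have ha := ltn_ord a; have hb := ltn_ord b.
rewrite !inordK; try lia.
by move=> [] /ord_inj.
Qed.

Definition sig := perm sigf_inj.

Lemma WV x : W sig x = V x.
Proof.
apply: ord_inj; rewrite WE; have hx := ltn_ord x.
case: ifP => h.
  case: x hx h => [[|[|x]] hx] h //=.
  by rewrite /V /= t0.
rewrite permE sigfE; congr (nat_of_ord (V _)); apply: ord_inj; rewrite !inordK; lia.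
Qed.

Lemma tV (j : 'I_M) : t (V j) = V (r j).
Proof.
rewrite /V -iterS rE; have hj := ltn_ord j.
have [e|ne] := eqVneq (nat_of_ord j) p.+2.
  by rewrite e modnn hiter.
by rewrite modn_small //; lia.
Qed.

Lemma Fsig : F sig = t.
Proof.
apply/permP => x; rewrite -(permKV (W sig) x) FW !WV.
by rewrite tV.
Qed.

Lemma sig_W : sig \in Wstar m.
Proof.
have hd : forall i, (t i < i)%N -> odd1 i && odd1 (t i).
  move: ht; rewrite inE => /andP[_ /forallP h] i; exact/implyP.
have hs : forall k, sig k = sigf k by move=> k; rewrite permE.
rewrite inE; apply/andP; split; apply/forallP => a.
  apply/forallP => b; apply/implyP => /andP[/eqP eb hlt].
  have ha := ltn_ord a; have hb := ltn_ord b; rewrite /= in eb.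
  have tv : t (V (inord a.+2)) = V (inord b.+2).
    rewrite tV; congr V; apply: ord_inj; rewrite rE !inordK ?modn_small //=; lia.
  have := hd (V (inord a.+2)); rewrite tv !hs -(odd1S2 (sigf a)) -(odd1S2 (sigf b)) !sigfE.
  apply; rewrite -!sigfE; rewrite !hs in hlt; lia.
apply/implyP => /eqP ea; have ha := ltn_ord a.
have tv : t (V (inord a.+2)) = ord0.
  rewrite tV; rewrite (_ : r _ = ord0) //; apply: ord_inj; rewrite rE inordK ?ea //= ?modnn //; lia.
have := hd (V (inord a.+2)); rewrite tv hs -(odd1S2 (sigf a)) sigfE => h.
have := Vge2 (j := inord a.+2); rewrite inordK; last lia.
move=> hv; have h' : (0 < V (inord a.+2))%N by lia.
by case/andP: (h h').
Qed.

End Surj.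

End Bij.

Lemma main_gen p : exists f : {perm 'I_p.+1} -> {perm 'I_p.+3},
    [/\ {in Wstar p.+1, forall s, f s \in Ccyc p.+3},
        {in Wstar p.+1 &, injective f},
        (forall t, t \in Ccyc p.+3 ->
           exists2 s, s \in Wstar p.+1 & f s = t)
      & {in Wstar p.+1, forall s, drop_count (f s) = (des s).+1}].
Proof.
exists (@F p); split.
- by move=> s hs; apply: F_cyc.
- by move=> s1 s2 _ _; apply: F_inj.
- by move=> t ht; exists (sig ht); [apply: sig_W | apply: Fsig].
- by move=> s _; apply: dropF.
Qed.

Theorem mainTheorem10 (n : nat) : (1 <= n)%N ->
  exists f : {perm 'I_(2 * n + 1)} -> {perm 'I_(2 * n + 3)},
    [/\ {in Wstar (2 * n + 1), forall s, f s \in Ccyc (2 * n + 3)},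
        {in Wstar (2 * n + 1) &, injective f},
        (forall t, t \in Ccyc (2 * n + 3) ->
           exists2 s, s \in Wstar (2 * n + 1) & f s = t)
      & {in Wstar (2 * n + 1), forall s, drop_count (f s) = (des s).+1}].
Proof.
move=> _.
have e1 : (2 * n + 1 = (2 * n).+1)%N by rewrite addn1.
have e3 : (2 * n + 3 = (2 * n).+3)%N by rewrite !addnS addn0.
rewrite e1 e3; exact: main_gen.
Qed.
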